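(* For all $\mathbf u\in\{0,1\}^{\mathbb N}$: $\inf(L(\mathbf u))=L(\inf(\mathbf u))$, $\inf(R(\mathbf u))=R(\inf(\mathbf u))$, and $0\,\sup(L(\mathbf u))=L(\sup(\mathbf u))$. If $\inf(\mathbf u)=\inf_1(\mathbf u)$, then $\inf(M(\mathbf u))=0\,M(\inf(\mathbf u))$. If $\sup(\mathbf u)=\sup_0(\mathbf u)$, then $\sup(R(\mathbf u))=1\,R(\sup(\mathbf u))$ and $\sup(M(\mathbf u))=1\,M(\sup(\mathbf u))$. Moreover: (a) For each $\sigma\in\{L,M,R\}^*$ there is a suffix $w$ of $\sigma(1)$ such that $\inf_1(\sigma(\mathbf u))=\inf(\sigma(\mathbf u))=w\,\sigma(\inf(\mathbf u))$ for all $\mathbf u\in\{0,1\}^{\mathbb N}$ with $\inf(\mathbf u)=\inf_1(\mathbf u)$. (b) For each $\sigma\in\{L,M,R\}^*M\cup\{L,M,R\}^*R$ there is a suffix $w$ of $\sigma(0)$ such that $\sup_0(\sigma(\mathbf u))=\sup(\sigma(\mathbf u))=w\,\sigma(\sup(\mathbf u))$ for all $\mathbf u\in\{0,1\}^{\mathbb N}$ with $\sup(\mathbf u)=\sup_0(\mathbf u)$. (c) For each $\sigma\in\{L,M,R\}^*L$ there is a prefix $w$ of $\sigma(\overline0)$ such that $w\,\sup_0(\sigma(\mathbf u))=w\,\sup(\sigma(\mathbf u))=\sigma(\sup(\mathbf u))$ for all $\mathbf u\in\{0,1\}^{\mathbb N}$ with $\sup(\mathbf u)=\sup_0(\mathbf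 u)$.
   Context: Infinite words over $\{0,1\}$ are ordered lexicographically; $\overline{w}$ denotes infinite repetition of $w$. For $\mathbf u=u_1u_2\cdots\in\{0,1\}^{\mathbb N}$, $\sup(\mathbf u)$ and $\inf(\mathbf u)$ are the lexicographic supremum and infimum of $\{u_ku_{k+1}\cdots:k\ge1\}$, $\inf_1(\mathbf u)=\inf\{u_{k+1}u_{k+2}\cdots:k\ge1,\ u_k=1\}$ and $\sup_0(\mathbf u)=\sup\{u_{k+1}u_{k+2}\cdots:k\ge1,\ u_k=0\}$. The substitutions (monoid morphisms on words, extended letterwise to infinite words) are $L:0\mapsto0,1\mapsto01$; $M:0\mapsto01,1\mapsto10$; $R:0\mapsto01,1\mapsto1$. $\{L,M,R\}^*$ is the monoid generated by them under composition (including the identity); $\{L,M,R\}^*X=\{\tau X:\tau\in\{L,M,R\}^*\}$ for $X\in\{L,M,R\}$. *)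

(* Defs.v *)
From mathcomp Require Import all_boot.
From Stdlib Require Import ClassicalEpsilon.
Set Implicit Arguments. Unset Strict Implicit. Unset Printing Implicit Defensive.

(* Letters: false = 0, true = 1.  Infinite words are indexed from 0
   (position i here is position i+1 in the paper). *)
Definition word := nat -> bool.

Definition lex_lt (u v : word) : Prop :=
  exists n, (forall i, i < n -> u i = v i) /\ u n = false /\ v n = true.
Definition lex_le (u v : word) : Prop := u = v \/ lex_lt u v.

Definition is_lub (S : word -> Prop) (w : word) : Prop :=
  (forall v, S v -> lex_le v w) /\
  (forall z, (forall v, S v -> lex_le v z) -> lex_le w z).
Definition is_glb (S : word -> Prop) (w : word) : Prop :=
  (forall v, S v -> lex_le w v) /\
  (forall z, (forall v, S v -> lex_le z v) -> lex_le z w).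

(* Lexicographic supremum / infimum of a set of infinite words
   ({0,1}^N is a complete lattice for the lexicographic order). *)
Definition lsup (S : word -> Prop) : word :=
  epsilon (inhabits (fun _ => false)) (is_lub S).
Definition linf (S : word -> Prop) : word :=
  epsilon (inhabits (fun _ => false)) (is_glb S).

Definition suffixes (u : word) (v : word) : Prop :=
  exists k, v = (fun i => u (k + i)).
Definition suffixes_after1 (u : word) (v : word) : Prop :=
  exists k, u k = true /\ v = (fun i => u (k.+1 + i)).
Definition suffixes_after0 (u : word) (v : word) : Prop :=
  exists k, u k = false /\ v = (fun i => u (k.+1 + i)).

Definition wsup (u : word) : word := lsup (suffixes u).
Definition winf (u : word) : word := linf (suffixes u).
Definition winf1 (u : word) : word := linf (suffixes_after1 u).
Definition wsup0 (u : word) : word := lsup (suffixes_after0 u).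

Definition wcat (w : seq bool) (u : word) : word :=
  fun n => if n < size w then nth false w n else u (n - size w).

Inductive gen := GL | GM | GR.

Definition gimg (g : gen) (a : bool) : seq bool :=
  match g, a with
  | GL, false => [:: false]
  | GL, true  => [:: false; true]
  | GM, false => [:: false; true]
  | GM, true  => [:: true; false]
  | GR, false => [:: false; true]
  | GR, true  => [:: true]
  end.

Definition gfin (g : gen) (w : seq bool) : seq bool := flatten (map (gimg g) w).

(* Morphism extended letterwise to an infinite word: since every image is
   nonempty, letter n of g(u) lies in g(u_0 ... u_n). *)
Definition ginf (g : gen) (u : word) : word :=
  fun n => nth false (flatten (map (gimg g) (mkseq u n.+1))) n.

(* An element sigma = X_1 X_2 ... X_k of {L,M,R}^* is a list of generators,
   acting by composition: sigma(x) = X_1(X_2(... X_k(x))). The empty list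
   is the identity. *)
Definition sfin (s : seq gen) (w : seq bool) : seq bool := foldr gfin w s.
Definition sinf (s : seq gen) (u : word) : word := foldr ginf u s.

Definition prefix_of_inf (w : seq bool) (u : word) : Prop :=
  forall i, i < size w -> nth false w i = u i.

Definition zeros : word := fun _ => false.

(* Main.v *)
Require Import Defs.
From mathcomp Require Import all_boot.
From Stdlib Require Import ClassicalEpsilon Classical FunctionalExtensionality.
From mathcomp Require Import zify.
Set Implicit Arguments. Unset Strict Implicit. Unset Printing Implicit Defensive.

Definition agree n (u v : word) := forall i, i < n -> u i = v i.
Definition shift k (u : word) : word := fun i => u (k + i).
Definition ones : word := fun _ => true.

Lemma agree_sym n u v : agree n u v -> agree n v u.
Proof. by move=> H i Hi; rewrite H. Qed.
Lemma agree_le m n u v : m <= n -> agree n u v -> agree m u v.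
Proof. by move=> Hmn H i Hi; apply: H; apply: leq_trans Hmn. Qed.
Lemma agree_trans n u v w : agree n u v -> agree n v w -> agree n u w.
Proof. by move=> H1 H2 i Hi; rewrite H1 // H2. Qed.

Lemma lt_irr u : ~ lex_lt u u.
Proof. by case=> n [_ [h1 h2]]; rewrite h1 in h2. Qed.

Lemma lt_trans u v w : lex_lt u v -> lex_lt v w -> lex_lt u w.
Proof.
case=> n [a1 [b1 c1]] [m [a2 [b2 c2]]].
case: (ltngtP n m) => h.
- exists n; split; last split => //.
  + by move=> i Hi; rewrite a1 // a2 // (ltn_trans Hi h).
  + by rewrite -a2.
- exists m; split; last split => //.
  + by move=> i Hi; rewrite a1 ?a2 // (ltn_trans Hi h).
  + by rewrite a1.
- by subst; rewrite c1 in b2.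
Qed.

Lemma first_diff u v : u <> v -> exists n, agree n u v /\ u n != v n.
Proof.
move=> neq.
have ex: exists i, u i != v i.
  apply: NNPP => H; apply: neq; apply: functional_extensionality => i.
  case: (eqVneq (u i) (v i)) => // Hn; exfalso; apply: H; by exists i.
case: (ex_minnP ex) => n Hn Hmin; exists n; split => // i Hi.
case: (eqVneq (u i) (v i)) => // Hne.
by have := Hmin i Hne; rewrite leqNgt Hi.
Qed.

Lemma lt_total u v : u = v \/ lex_lt u v \/ lex_lt v u.
Proof.
case: (classic (u = v)) => [->|neq]; first by left.
right; case: (first_diff neq) => n [Ha Hn].
move: Hn; case Eu: (u n); case Ev: (v n) => // _.
- by right; exists n; split; [exact: agree_sym|].
- by left; exists n.
Qed.

Lemma not_lt_le u v : ~ lex_lt v u -> lex_le u v.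
Proof. by move=> H; case: (lt_total u v) => [->|[h|h]]; [left|right|]. Qed.

Lemma le_lt_trans u v w : lex_le u v -> lex_lt v w -> lex_lt u w.
Proof. by case=> [->//|h1] h2; apply: lt_trans h1 h2. Qed.
Lemma lt_le_trans u v w : lex_lt u v -> lex_le v w -> lex_lt u w.
Proof. by move=> h1 [<-//|h2]; apply: lt_trans h1 h2. Qed.
Lemma le_trans u v w : lex_le u v -> lex_le v w -> lex_le u w.
Proof. by case=> [->//|h1] h2; right; apply: lt_le_trans h1 h2. Qed.
Lemma le_antisym u v : lex_le u v -> lex_le v u -> u = v.
Proof.
case=> // h1 [//|h2]; exfalso; apply: (@lt_irr u); exact: lt_trans h1 h2.
Qed.
Lemma le_refl u : lex_le u u. Proof. by left. Qed.
Lemma lt_le u v : lex_lt u v -> lex_le u v. Proof. by right. Qed.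
Lemma le_not_lt u v : lex_le u v -> ~ lex_lt v u.
Proof. by move=> h1 h2; apply: (@lt_irr u); apply: le_lt_trans h1 h2. Qed.

Lemma lt_agree_l w z : lex_lt w z -> exists n, forall t, agree n t w -> lex_lt t z.
Proof.
case=> n [a [b c]]; exists n.+1 => t At; exists n; split; last split => //.
- by move=> i Hi; rewrite At ?a // (ltn_trans Hi).
- by rewrite At.
Qed.
Lemma lt_agree_r w z : lex_lt w z -> exists n, forall t, agree n t z -> lex_lt w t.
Proof.
case=> n [a [b c]]; exists n.+1 => t At; exists n; split; last split => //.
- by move=> i Hi; rewrite At ?a // (ltn_trans Hi).
- by rewrite At.
Qed.

Definition approx (S : word -> Prop) w := forall n, exists t, S t /\ agree n t w.

Lemma glb_of_approx S w : (forall t, S t -> lex_le w t) -> approx S w -> is_glb S w.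
Proof.
move=> Hlb Hap; split => // z Hz; apply: not_lt_le => Hlt.
case: (lt_agree_l Hlt) => n Hn; case: (Hap n) => t [St At].
exact: (le_not_lt (Hz t St) (Hn t At)).
Qed.
Lemma lub_of_approx S w : (forall t, S t -> lex_le t w) -> approx S w -> is_lub S w.
Proof.
move=> Hlb Hap; split => // z Hz; apply: not_lt_le => Hlt.
case: (lt_agree_r Hlt) => n Hn; case: (Hap n) => t [St At].
exact: (le_not_lt (Hz t St) (Hn t At)).
Qed.

Lemma glb_unique S a b : is_glb S a -> is_glb S b -> a = b.
Proof. by move=> [h1 h2] [h3 h4]; apply: le_antisym; [apply: h4|apply: h2]. Qed.
Lemma lub_unique S a b : is_lub S a -> is_lub S b -> a = b.
Proof. by move=> [h1 h2] [h3 h4]; apply: le_antisym; [apply: h2|apply: h4]. Qed.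

Lemma linf_eq S w : is_glb S w -> linf S = w.
Proof.
move=> H; apply: (glb_unique _ H); rewrite /linf; apply: epsilon_spec; by exists w.
Qed.
Lemma lsup_eq S w : is_lub S w -> lsup S = w.
Proof.
move=> H; apply: (lub_unique _ H); rewrite /lsup; apply: epsilon_spec; by exists w.
Qed.

Definition decP (P : Prop) : bool := if excluded_middle_informative P then true else false.
Lemma decPT (P : Prop) : decP P = true <-> P.
Proof. by rewrite /decP; case: excluded_middle_informative. Qed.

Fixpoint gpref (S : word -> Prop) n : seq bool :=
  match n with 0 => [::] | n'.+1 => let p := gpref S n' in
   rcons p (~~ decP (exists s, S s /\ prefix_of_inf p s /\ s (size p) = false)) end.
Definition gw S : word := fun i => nth false (gpref S i.+1) i.

Lemma size_gpref S n : size (gpref S n) = n.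
Proof. by elim: n => //= n IH; rewrite size_rcons IH. Qed.

Lemma gpref_nth S n m i : i < n -> n <= m -> nth false (gpref S m) i = nth false (gpref S n) i.
Proof.
move=> Hi; elim: m => [|m IH]; first by rewrite leqn0 => /eqP E; subst; rewrite ltn0 in Hi.
rewrite leq_eqVlt => /orP [/eqP <-//|Hnm].
by rewrite /= nth_rcons size_gpref (leq_trans Hi Hnm) IH.
Qed.

Lemma gw_pref S n : prefix_of_inf (gpref S n) (gw S).
Proof.
move=> i; rewrite size_gpref => Hi; rewrite /gw (@gpref_nth S i.+1 n i) //.
Qed.

Lemma gw_bit S n : gw S n = ~~ decP (exists s, S s /\ prefix_of_inf (gpref S n) s /\ s n = false).
Proof. by rewrite /gw /= nth_rcons size_gpref ltnn eqxx. Qed.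

Lemma pref_agree S n s : prefix_of_inf (gpref S n) s <-> agree n s (gw S).
Proof.
split.
- move=> H i Hi; rewrite -H ?size_gpref // gw_pref // size_gpref //.
- move=> H i; rewrite size_gpref => Hi; rewrite H // gw_pref // size_gpref //.
Qed.

Lemma glb_exists S : is_glb S (gw S).
Proof.
split.
- move=> t St; apply: not_lt_le => [[n [a [b c]]]].
  move: c; rewrite gw_bit; apply/negP; rewrite negbK; apply/decPT.
  by exists t; split => //; split => //; apply/pref_agree.
- move=> z Hz; apply: not_lt_le => [[n [a [b c]]]].
  move: b; rewrite gw_bit => /negbFE /decPT [s [Ss [Ps Hs]]].
  apply: (le_not_lt (Hz s Ss)); exists n; split; last split => //.
  by move/pref_agree: Ps => Ps i Hi; rewrite Ps // a.
Qed.

Lemma gw_approx S : (exists s, S s) -> approx S (gw S).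
Proof.
move=> [s0 S0] n.
suff: exists s, S s /\ prefix_of_inf (gpref S n) s.
  by case=> s [Ss Ps]; exists s; split => //; apply/pref_agree.
elim: n => [|n [s [Ss Ps]]]; first by exists s0; split => // i.
case: (excluded_middle_informative (exists t, S t /\ prefix_of_inf (gpref S n) t /\ t n = false)) => [[t [St [Pt Ht]]]|Hno].
- exists t; split => //; apply/pref_agree => i; rewrite ltnS leq_eqVlt => /orP [/eqP ->|Hi].
  + rewrite gw_bit Ht; have ->: decP (exists s, S s /\ prefix_of_inf (gpref S n) s /\ s n = false) = true.
      by apply/decPT; exists t.
    by [].
  + exact: (iffLR (@pref_agree S n t) Pt i Hi).
- exists s; split => //; apply/pref_agree => i; rewrite ltnS leq_eqVlt => /orP [/eqP ->|Hi].
  + rewrite gw_bit; have ->: decP (exists s, S s /\ prefix_of_inf (gpref S n) s /\ s n = false) = false.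
      by apply/negbTE/negP => /decPT.
    case Es: (s n) => //; exfalso; apply: Hno; exists s; split=> //.
  + exact: (iffLR (@pref_agree S n s) Ps i Hi).
Qed.

Definition cpl (u : word) : word := fun i => ~~ u i.
Lemma cplK u : cpl (cpl u) = u.
Proof. by apply: functional_extensionality => i; rewrite /cpl negbK. Qed.
Lemma lt_cpl u v : lex_lt u v -> lex_lt (cpl v) (cpl u).
Proof.
case=> n [a [b c]]; exists n; split; last by rewrite /cpl b c.
by move=> i Hi; rewrite /cpl a.
Qed.
Lemma le_cpl u v : lex_le u v -> lex_le (cpl v) (cpl u).
Proof. by case=> [->|h]; [left|right; apply: lt_cpl]. Qed.

Definition lw S := cpl (gw (fun x => S (cpl x))).
Lemma lub_exists S : is_lub S (lw S).
Proof.
have [h1 h2] := glb_exists (fun x => S (cpl x)); split.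
- move=> v Sv; rewrite -(cplK v) in Sv; have := h1 _ Sv => /le_cpl; by rewrite cplK.
- move=> z Hz; have: lex_le (cpl z) (gw (fun x => S (cpl x))).
    apply: h2 => x Sx; have := Hz _ Sx => /le_cpl; by rewrite cplK.
  by move/le_cpl; rewrite cplK.
Qed.
Lemma lw_approx S : (exists s, S s) -> approx S (lw S).
Proof.
move=> [s0 S0] n.
have: exists s, S (cpl s) by exists (cpl s0); rewrite cplK.
move/gw_approx => /(_ n) [t [St At]]; exists (cpl t); split => //.
by move=> i Hi; rewrite /lw /cpl At.
Qed.

Lemma linf_spec S : is_glb S (linf S).
Proof. by rewrite (linf_eq (glb_exists S)); apply: glb_exists. Qed.
Lemma lsup_spec S : is_lub S (lsup S).
Proof. by rewrite (lsup_eq (lub_exists S)); apply: lub_exists. Qed.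
Lemma linf_approx S : (exists s, S s) -> approx S (linf S).
Proof. by rewrite (linf_eq (glb_exists S)); apply: gw_approx. Qed.
Lemma lsup_approx S : (exists s, S s) -> approx S (lsup S).
Proof. by rewrite (lsup_eq (lub_exists S)); apply: lw_approx. Qed.
Lemma linf_le S t : S t -> lex_le (linf S) t.
Proof. by have [h _] := linf_spec S; apply: h. Qed.
Lemma lsup_ge S t : S t -> lex_le t (lsup S).
Proof. by have [h _] := lsup_spec S; apply: h. Qed.
Lemma wcat0 x : wcat [::] x = x.
Proof. by apply: functional_extensionality => n; rewrite /wcat /= subn0. Qed.

Lemma wcat_cat a b x : wcat a (wcat b x) = wcat (a ++ b) x.
Proof.
apply: functional_extensionality => n; rewrite /wcat size_cat nth_cat.
case: (ltnP n (size a)) => H; first by rewrite ltn_addr.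
by rewrite ltn_subLR // subnDA.
Qed.

Lemma shift_wcat w x : shift (size w) (wcat w x) = x.
Proof.
apply: functional_extensionality => i; rewrite /shift /wcat.
by rewrite ltnNge leq_addr /= addKn.
Qed.

Lemma shift_add a b x : shift a (shift b x) = shift (b + a) x.
Proof. by apply: functional_extensionality => i; rewrite /shift addnA. Qed.
Lemma shift0 x : shift 0 x = x.
Proof. by apply: functional_extensionality => i. Qed.

Lemma eta_wcat x : x = wcat [:: x 0] (shift 1 x).
Proof.
apply: functional_extensionality => i; rewrite /wcat /shift /=.
by case: i => //= i; rewrite subn1 /= add1n.
Qed.

Lemma shift_wcat_drop j w x : j <= size w -> shift j (wcat w x) = wcat (drop j w) x.
Proof.
move=> H; rewrite -{1}(cat_take_drop j w) -wcat_cat.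
have E: size (take j w) = j by rewrite size_takel.
by rewrite -{1}E shift_wcat.
Qed.

Lemma wcat_agree w x y n : agree n x y -> agree (size w + n) (wcat w x) (wcat w y).
Proof.
move=> H i Hi; rewrite /wcat; case: ltnP => // Hw; apply: H.
by rewrite ltn_subLR.
Qed.

Lemma lt_wcat w x y : lex_lt x y -> lex_lt (wcat w x) (wcat w y).
Proof.
case=> n [a [b c]]; exists (size w + n); split.
- move=> i Hi; rewrite /wcat; case: ltnP => // Hw; apply: a; by rewrite ltn_subLR.
- by rewrite /wcat ltnNge leq_addr /= addKn b c.
Qed.
Lemma le_wcat w x y : lex_le x y -> lex_le (wcat w x) (wcat w y).
Proof. by case=> [->|h]; [left|right; apply: lt_wcat]. Qed.
Lemma wcat_inj w x y : wcat w x = wcat w y -> x = y.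
Proof. by move=> H; rewrite -(shift_wcat w x) H shift_wcat. Qed.
Lemma lt_wcat_inv w x y : lex_lt (wcat w x) (wcat w y) -> lex_lt x y.
Proof.
move=> H; case: (lt_total x y) => [E|[//|h]]; first by subst; case: (lt_irr H).
by case: (lt_irr (lt_trans H (lt_wcat w h))).
Qed.
Lemma le_wcat_inv w x y : lex_le (wcat w x) (wcat w y) -> lex_le x y.
Proof. by case=> [/wcat_inj ->|h]; [left|right; apply: lt_wcat_inv h]. Qed.

Lemma lt_first x y : x 0 = false -> y 0 = true -> lex_lt x y.
Proof. by move=> h1 h2; exists 0. Qed.
Lemma le_first x y : lex_le x y -> x 0 = true -> y 0 = true.
Proof.
case=> [->//|[n [a [b c]]]] H; case: n a b c => [|n] a b c; first by rewrite H in b.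
by rewrite -a.
Qed.
Lemma wcat_0 b w x : wcat (b :: w) x 0 = b.
Proof. by []. Qed.

Lemma size_gimg g b : 0 < size (gimg g b).
Proof. by case: g; case: b. Qed.

Lemma size_flat g s : size s <= size (flatten (map (gimg g) s)).
Proof.
elim: s => //= b s IH; rewrite size_cat; have := size_gimg g b.
by move=> H; rewrite -add1n leq_add.
Qed.
Lemma mkseq_add (u : word) a b : mkseq u (a + b) = mkseq u a ++ mkseq (shift a u) b.
Proof.
rewrite /mkseq iotaD map_cat; congr (_ ++ _).
by rewrite add0n -{1}(addn0 a) iotaDl -map_comp; apply: eq_map => i /=; rewrite /shift.
Qed.

Lemma ginf_nth g u m i : i < m -> nth false (flatten (map (gimg g) (mkseq u m))) i = ginf g u i.
Proof.
move=> H; rewrite /ginf -(subnKC H) mkseq_add map_cat flatten_cat nth_cat.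
by rewrite (leq_trans _ (size_flat g _)) // size_mkseq.
Qed.

Lemma ginf_cons g u : ginf g u = wcat (gimg g (u 0)) (ginf g (shift 1 u)).
Proof.
apply: functional_extensionality => n.
rewrite /wcat {1}/ginf -add1n mkseq_add /= nth_cat.
case: ltnP => // H; rewrite ginf_nth //.
have := size_gimg g (u 0); case: (size _) H => // s H _.
by rewrite ltn_subrL (leq_ltn_trans (leq0n s) H).
Qed.

Lemma ginf_0 g x : ginf g x 0 = head false (gimg g (x 0)).
Proof. rewrite ginf_cons /wcat size_gimg; by case: (gimg g (x 0)). Qed.

Lemma gfin_cons g b w : gfin g (b :: w) = gimg g b ++ gfin g w.
Proof. by []. Qed.

Lemma ginf_wcat g w x : ginf g (wcat w x) = wcat (gfin g w) (ginf g x).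
Proof.
elim: w => [|b w IH]; first by rewrite wcat0 /gfin /= wcat0.
rewrite (ginf_cons g (wcat (b :: w) x)) wcat_0.
have ->: shift 1 (wcat (b :: w) x) = wcat w x.
  by rewrite -cat1s -wcat_cat (shift_wcat [:: b]).
by rewrite IH wcat_cat.
Qed.

Lemma sinf_wcat s w x : sinf s (wcat w x) = wcat (sfin s w) (sinf s x).
Proof. by elim: s => //= g s IH; rewrite IH ginf_wcat. Qed.

Lemma ginf_agree g n u v : agree n u v -> agree n (ginf g u) (ginf g v).
Proof.
move=> H i Hi; rewrite /ginf.
have ->: mkseq u i.+1 = mkseq v i.+1; last by [].
rewrite /mkseq; apply/eq_in_map => j; rewrite mem_iota => /andP [_ Hj].
by apply: H; apply: leq_trans Hj _.
Qed.

Lemma ginf_lt g u v : lex_lt u v -> lex_lt (ginf g u) (ginf g v).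
Proof.
case=> n; elim: n u v => [|n IH] u v [a [b c]].
  rewrite (ginf_cons g u) (ginf_cons g v) b c.
  case: g; [|by apply: lt_first|by apply: lt_first].
  exists 1; split; first by move=> [|i] //; rewrite /wcat.
  by rewrite /wcat /= subnn ginf_0; case: (shift 1 u 0).
rewrite (ginf_cons g u) (ginf_cons g v) (a 0 _) //; apply: lt_wcat; apply: IH.
split; last by split.
by move=> i Hi; rewrite /shift a.
Qed.
Lemma ginf_le g u v : lex_le u v -> lex_le (ginf g u) (ginf g v).
Proof. by case=> [->|h]; [left|right; apply: ginf_lt]. Qed.

Lemma ginf_shift g v k : exists K, shift K (ginf g v) = ginf g (shift k v).
Proof.
elim: k v => [|k IH] v; first by exists 0; rewrite !shift0.
case: (IH (shift 1 v)) => K HK; exists (size (gimg g (v 0)) + K).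
by rewrite -shift_add (ginf_cons g v) shift_wcat HK shift_add.
Qed.

Lemma shift_0 k (v : word) : shift k v 0 = v k.
Proof. by rewrite /shift addn0. Qed.

Definition after b (u v : word) := exists k, u k = b /\ v = shift k.+1 u.

Lemma suffix_pos g v k j : j <= size (gimg g (v k)) ->
  suffixes (ginf g v) (wcat (drop j (gimg g (v k))) (ginf g (shift k.+1 v))).
Proof.
move=> H; case: (ginf_shift g v k) => K HK; exists (K + j).
rewrite -/(shift (K + j) (ginf g v)) -shift_add HK (ginf_cons g (shift k v)).
by rewrite shift_wcat_drop shift_0 ?shift_add ?addn1.
Qed.

Lemma after_pos g v k j b : j < size (gimg g (v k)) -> nth false (gimg g (v k)) j = b ->
  after b (ginf g v) (wcat (drop j.+1 (gimg g (v k))) (ginf g (shift k.+1 v))).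
Proof.
move=> H Hb; case: (suffix_pos (ltnW H)) => K HK.
rewrite -/(shift K (ginf g v)) in HK.
exists K; split.
- have := f_equal (fun x => x 0) HK; rewrite shift_0 => <-.
  by rewrite /wcat size_drop subn_gt0 H nth_drop addn0.
- have ->: shift K.+1 (ginf g v) = shift 1 (shift K (ginf g v)) by rewrite shift_add ?addn1.
  by rewrite -HK shift_wcat_drop ?size_drop ?subn_gt0 // drop_drop add1n.
Qed.
Lemma shift_form g v K : exists k j, j < size (gimg g (v k)) /\
  shift K (ginf g v) = wcat (drop j (gimg g (v k))) (ginf g (shift k.+1 v)).
Proof.
elim: K {-2}K (leqnn K) v => [|n IH] K HK v.
  move: HK; rewrite leqn0 => /eqP ->; exists 0, 0; split; first exact: size_gimg.
  by rewrite shift0 drop0 -ginf_cons.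
case: (ltnP K (size (gimg g (v 0)))) => H.
  exists 0, K; split => //.
  by rewrite {1}(ginf_cons g v) shift_wcat_drop // ltnW.
have HK': K - size (gimg g (v 0)) <= n.
  have := size_gimg g (v 0); case: (size _) H => // s H _.
  lia.
case: (IH _ HK' (shift 1 v)) => k [j [Hj E]]; exists k.+1, j; split => //.
rewrite -(subnKC H) -shift_add {1}(ginf_cons g v) shift_wcat E.
by rewrite shift_add.
Qed.
Lemma after_form g v b t : after b (ginf g v) t -> exists k j, j < size (gimg g (v k)) /\
  nth false (gimg g (v k)) j = b /\
  t = wcat (drop j.+1 (gimg g (v k))) (ginf g (shift k.+1 v)).
Proof.
case=> K [HK ->]; case: (shift_form g v K) => k [j [Hj E]]; exists k, j; split => //; split.
- have := f_equal (fun x => x 0) E; rewrite shift_0 HK => ->.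
  by rewrite /wcat size_drop subn_gt0 Hj nth_drop addn0.
- have ->: shift K.+1 (ginf g v) = shift 1 (shift K (ginf g v)) by rewrite shift_add ?addn1.
  by rewrite E shift_wcat_drop ?size_drop ?subn_gt0 // drop_drop add1n.
Qed.

Lemma suffix_form g v t : suffixes (ginf g v) t -> exists k j, j < size (gimg g (v k)) /\
  t = wcat (drop j (gimg g (v k))) (ginf g (shift k.+1 v)).
Proof. by case=> K ->; apply: shift_form. Qed.

Lemma suffix_shift v k : suffixes v (shift k v).
Proof. by exists k. Qed.

Lemma glb_map (S T : word -> Prop) f m : approx S m -> (forall s, S s -> T (f s)) ->
  (forall n u v, agree n.+1 u v -> agree n (f u) (f v)) ->
  (forall t, T t -> lex_le (f m) t) -> linf T = f m.
Proof.
move=> Ha Hi Hc Hl; apply: linf_eq; apply: glb_of_approx => // n.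
by case: (Ha n.+1) => s [Ss As]; exists (f s); split; [apply: Hi|apply: Hc].
Qed.
Lemma lub_map (S T : word -> Prop) f m : approx S m -> (forall s, S s -> T (f s)) ->
  (forall n u v, agree n.+1 u v -> agree n (f u) (f v)) ->
  (forall t, T t -> lex_le t (f m)) -> lsup T = f m.
Proof.
move=> Ha Hi Hc Hl; apply: lsup_eq; apply: lub_of_approx => // n.
by case: (Ha n.+1) => s [Ss As]; exists (f s); split; [apply: Hi|apply: Hc].
Qed.

Lemma cont_g g n u v : agree n.+1 u v -> agree n (ginf g u) (ginf g v).
Proof. by move=> H; apply: (agree_le (leqnSn n)); apply: ginf_agree. Qed.
Lemma cont_cg b g n u v : agree n.+1 u v -> agree n (wcat [:: b] (ginf g u)) (wcat [:: b] (ginf g v)).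
Proof.
move=> H; apply: (@agree_le n (size [:: b] + n.+1)); first by rewrite /=; lia.
by apply: wcat_agree; apply: ginf_agree.
Qed.
Lemma cont_cgs b g n u v : agree n.+1 u v ->
  agree n (wcat [:: b] (ginf g (shift 1 u))) (wcat [:: b] (ginf g (shift 1 v))).
Proof.
move=> H; apply: (@agree_le n (size [:: b] + n)); first by rewrite /=; lia.
apply: wcat_agree; apply: ginf_agree => i Hi; rewrite /shift; apply: H.
by rewrite add1n ltnS.
Qed.

Lemma le_ones x : lex_le x ones.
Proof.
case: (classic (x = ones)) => [->|neq]; first exact: le_refl.
right; case: (first_diff neq) => n [a b]; exists n; split => //.
by move: b; rewrite /ones; case: (x n).
Qed.
Lemma le_zeros x : lex_le zeros x.
Proof.
case: (classic (zeros = x)) => [->|neq]; first exact: le_refl.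
right; case: (first_diff neq) => n [a b]; exists n; split => //.
by move: b; rewrite /zeros; case: (x n).
Qed.

Lemma zeros_case v : (exists k, v k = true) \/ v = zeros.
Proof.
case: (classic (exists k, v k = true)) => H; [by left|right].
apply: functional_extensionality => k; rewrite /zeros; case E: (v k) => //.
by case: H; exists k.
Qed.
Lemma ones_case v : (exists k, v k = false) \/ v = ones.
Proof.
case: (classic (exists k, v k = false)) => H; [by left|right].
apply: functional_extensionality => k; rewrite /ones; case E: (v k) => //.
by case: H; exists k.
Qed.

Lemma suffixes_const b t : suffixes (fun _ => b) t -> t = (fun _ => b).
Proof. by case=> k ->. Qed.

Lemma lsup_const b : lsup (suffixes (fun _ => b)) = (fun _ => b).
Proof.
apply: lsup_eq; apply: lub_of_approx.
- by move=> t /suffixes_const ->; apply: le_refl.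
- by move=> n; exists (fun _ => b); split => //; exists 0.
Qed.
Lemma linf_const b : linf (suffixes (fun _ => b)) = (fun _ => b).
Proof.
apply: linf_eq; apply: glb_of_approx.
- by move=> t /suffixes_const ->; apply: le_refl.
- by move=> n; exists (fun _ => b); split => //; exists 0.
Qed.

Lemma winf1_nonempty v : winf v = winf1 v -> exists k, v k = true.
Proof.
case: (zeros_case v) => // -> H; exfalso.
have h1: winf zeros = zeros by apply: linf_const.
have h2: winf1 zeros = ones.
  apply: linf_eq; split; first by move=> t [k []].
  by move=> z _; apply: le_ones.
by have := f_equal (fun x => x 0) H; rewrite h1 h2.
Qed.
Lemma wsup0_nonempty v : wsup v = wsup0 v -> exists k, v k = false.
Proof.
case: (ones_case v) => // -> H; exfalso.
have h1: wsup ones = ones by apply: lsup_const.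
have h2: wsup0 ones = zeros.
  apply: lsup_eq; split; first by move=> t [k []].
  by move=> z _; apply: le_zeros.
by have := f_equal (fun x => x 0) H; rewrite h1 h2.
Qed.

Lemma ginf_GL_zeros : ginf GL zeros = zeros.
Proof.
have E: ginf GL zeros = wcat [:: false] (ginf GL zeros).
  by rewrite {1}ginf_cons; congr wcat.
apply: functional_extensionality => n; elim: n => [|n IH]; first by rewrite E.
by rewrite E /wcat /= subn1 /= IH.
Qed.
Lemma shift1_shift k (v : word) : shift 1 (shift k v) = shift k.+1 v.
Proof. by rewrite shift_add addn1. Qed.
Lemma suffix_self v : suffixes v v.
Proof. by exists 0; apply: functional_extensionality. Qed.
Lemma suffix_img g v k : suffixes (ginf g v) (ginf g (shift k v)).
Proof. by case: (ginf_shift g v k) => K HK; exists K; rewrite -HK. Qed.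
Lemma ginf_shift_cons g v k : ginf g (shift k v) = wcat (gimg g (v k)) (ginf g (shift k.+1 v)).
Proof. by rewrite ginf_cons shift_0 shift1_shift. Qed.
Lemma shift_cons (v : word) k : shift k v = wcat [:: v k] (shift k.+1 v).
Proof. by rewrite {1}(eta_wcat (shift k v)) shift_0 shift1_shift. Qed.
Lemma wsup_ge v k : lex_le (shift k v) (wsup v).
Proof. exact: (lsup_ge (suffix_shift v k)). Qed.
Lemma winf_le v k : lex_le (winf v) (shift k v).
Proof. exact: (linf_le (suffix_shift v k)). Qed.
Lemma winf1_le v k : v k = true -> lex_le (winf1 v) (shift k.+1 v).
Proof. by move=> H; apply: linf_le; exists k. Qed.
Lemma wsup0_ge v k : v k = false -> lex_le (shift k.+1 v) (wsup0 v).
Proof. by move=> H; apply: lsup_ge; exists k. Qed.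

Lemma IM_aux m x : lex_le m x -> lex_lt (wcat [:: false] (ginf GM m)) (ginf GM x).
Proof.
move=> H; case E: (x 0).
  by apply: lt_first => //; rewrite ginf_0 E.
case Em: (m 0); first by have := le_first H Em; rewrite E.
exists 1; split; first by move=> [|i] // _; rewrite ginf_0 E.
by rewrite /wcat /= ginf_0 Em (ginf_cons GM x) E.
Qed.

Lemma inf_L v : winf (ginf GL v) = ginf GL (winf v).
Proof.
apply: (@glb_map (suffixes v)).
- by apply: linf_approx; exists v; apply: suffix_self.
- by move=> s [k ->]; apply: (suffix_img GL v k).
- exact: cont_g.
- move=> t /suffix_form [k [j [Hj ->]]]; case: j Hj => [|j] Hj.
    by rewrite drop0 -ginf_shift_cons; apply: ginf_le; apply: winf_le.
  case: (v k) Hj => //; case: j => //= _.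
  by apply: lt_le; apply: lt_first => //; rewrite ginf_0; case: (winf v 0).
Qed.

Lemma inf_R v : winf (ginf GR v) = ginf GR (winf v).
Proof.
apply: (@glb_map (suffixes v)).
- by apply: linf_approx; exists v; apply: suffix_self.
- by move=> s [k ->]; apply: (suffix_img GR v k).
- exact: cont_g.
- move=> t /suffix_form [k [j [Hj ->]]]; case: j Hj => [|j] Hj.
    by rewrite drop0 -ginf_shift_cons; apply: ginf_le; apply: winf_le.
  case E: (v k) Hj => //; case: j => //= _.
  have ->: wcat [:: true] (ginf GR (shift k.+1 v)) = ginf GR (wcat [:: true] (shift k.+1 v)).
    by rewrite ginf_wcat.
  apply: ginf_le; apply: (le_trans (winf_le v k)); rewrite shift_cons E.
  by apply: lt_le; apply: lt_first.
Qed.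

Lemma inf_M v : winf v = winf1 v -> winf (ginf GM v) = wcat [:: false] (ginf GM (winf v)).
Proof.
move=> H; have Hm: forall k, lex_le (winf v) (shift k v) by apply: winf_le.
rewrite H; apply: (@glb_map (after true v) _ (fun s => wcat [:: false] (ginf GM s)) (winf1 v)).
- by apply: linf_approx; case: (winf1_nonempty H) => k Hk; exists (shift k.+1 v); exists k.
- by move=> s [k [Hk ->]]; have := @suffix_pos GM v k 1; rewrite Hk => /(_ isT).
- exact: cont_cg.
- move=> t /suffix_form [k [j [Hj ->]]]; case: j Hj => [|j] Hj.
    rewrite drop0 -ginf_shift_cons -H; apply: lt_le; exact: IM_aux.
  case E: (v k) Hj => //; case: j => //= _.
    apply: le_wcat; apply: ginf_le; exact: winf1_le.
  by apply: lt_le; apply: lt_first.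
Qed.
Lemma inf1_L v : winf v = winf1 v -> winf1 (ginf GL v) = winf (ginf GL v).
Proof.
move=> H; rewrite inf_L H.
apply: (@glb_map (after true v) (after true (ginf GL v)) (ginf GL) (winf1 v)).
- by apply: linf_approx; case: (winf1_nonempty H) => k Hk; exists (shift k.+1 v); exists k.
- by move=> s [k [Hk ->]]; have := @after_pos GL v k 1 true; rewrite Hk => /(_ isT isT); rewrite /= wcat0.
- exact: cont_g.
- move=> t /after_form [k [j [Hj [Hn ->]]]].
  case E: (v k) Hj Hn; case: j => [|[|j]] //= _ _.
  by rewrite wcat0; apply: ginf_le; apply: winf1_le.
Qed.

Lemma inf1_R v : winf v = winf1 v -> winf1 (ginf GR v) = winf (ginf GR v).
Proof.
move=> H; rewrite inf_R H.
apply: (@glb_map (after true v) (after true (ginf GR v)) (ginf GR) (winf1 v)).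
- by apply: linf_approx; case: (winf1_nonempty H) => k Hk; exists (shift k.+1 v); exists k.
- by move=> s [k [Hk ->]]; have := @after_pos GR v k 0 true; rewrite Hk => /(_ isT isT); rewrite /= wcat0.
- exact: cont_g.
- move=> t /after_form [k [j [Hj [Hn ->]]]].
  case E: (v k) Hj Hn; case: j => [|[|j]] //= _ _; rewrite wcat0; apply: ginf_le.
    exact: winf1_le.
  by rewrite -H; apply: winf_le.
Qed.

Lemma inf1_M v : winf v = winf1 v -> winf1 (ginf GM v) = winf (ginf GM v).
Proof.
move=> H; rewrite inf_M // H.
apply: (@glb_map (after true v) (after true (ginf GM v)) (fun s => wcat [:: false] (ginf GM s)) (winf1 v)).
- by apply: linf_approx; case: (winf1_nonempty H) => k Hk; exists (shift k.+1 v); exists k.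
- by move=> s [k [Hk ->]]; have := @after_pos GM v k 0 true; rewrite Hk => /(_ isT isT).
- exact: cont_cg.
- move=> t /after_form [k [j [Hj [Hn ->]]]].
  case E: (v k) Hj Hn; case: j => [|[|j]] //= _ _.
    by apply: le_wcat; apply: ginf_le; apply: winf1_le.
  by rewrite wcat0; apply: lt_le; apply: IM_aux; rewrite -H; apply: winf_le.
Qed.
Lemma approx_first S m : approx S m -> approx (fun t => S t /\ t 0 = m 0) m.
Proof.
move=> H n; case: (H n.+1) => t [St At]; exists t; split; first by split => //; apply: At.
by apply: (agree_le (leqnSn n)).
Qed.
Lemma ginfL_0 x : ginf GL x 0 = false.
Proof. by rewrite ginf_0; case: (x 0). Qed.

Lemma supL_core v k : v k = true ->
  wsup (ginf GL v) = wcat [:: true] (ginf GL (shift 1 (wsup v))) /\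
  wsup0 (ginf GL v) = wcat [:: true] (ginf GL (shift 1 (wsup v))).
Proof.
move=> Hk.
have HM: wsup v 0 = true by apply: (le_first (wsup_ge v k)); rewrite shift_0.
have Hb: forall k', v k' = true -> lex_le (wcat [:: true] (ginf GL (shift k'.+1 v)))
    (wcat [:: true] (ginf GL (shift 1 (wsup v)))).
  move=> k' Hk'; apply: le_wcat; apply: ginf_le; apply: (@le_wcat_inv [:: true]).
  have E1: wcat [:: true] (shift 1 (wsup v)) = wsup v by rewrite {2}(eta_wcat (wsup v)) HM.
  have E2 := shift_cons v k'; rewrite Hk' in E2.
  by rewrite E1 -E2; apply: wsup_ge.
have Ha := approx_first (lsup_approx (ex_intro _ v (suffix_self v))).
split.
- apply: (@lub_map _ _ (fun s => wcat [:: true] (ginf GL (shift 1 s))) (wsup v) Ha).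
  + move=> s [[k' Es] Hs]; change (s = shift k' v) in Es; subst s.
    have {}Hs: v k' = true by move: Hs; rewrite /shift addn0 => ->; exact: HM.
    rewrite shift1_shift.
    by have := @suffix_pos GL v k' 1; rewrite Hs => /(_ isT).
  + exact: cont_cgs.
  + move=> t /suffix_form [k' [j [Hj ->]]]; case E: (v k') Hj; case: j => [|[|j]] //= _.
    * by apply: lt_le; apply: lt_first.
    * exact: Hb.
    * by apply: lt_le; apply: lt_first.
- apply: (@lub_map _ _ (fun s => wcat [:: true] (ginf GL (shift 1 s))) (wsup v) Ha).
  + move=> s [[k' Es] Hs]; change (s = shift k' v) in Es; subst s.
    have {}Hs: v k' = true by move: Hs; rewrite /shift addn0 => ->; exact: HM.
    rewrite shift1_shift.
    by have := @after_pos GL v k' 0 false; rewrite Hs => /(_ isT erefl).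
  + exact: cont_cgs.
  + move=> t /after_form [k' [j [Hj [Hn ->]]]]; case E: (v k') Hj Hn; case: j => [|[|j]] //= _ _.
    * exact: Hb.
    * by rewrite wcat0; apply: lt_le; apply: lt_first => //; rewrite ginfL_0.
Qed.

Lemma sup_L v : wcat [:: false] (wsup (ginf GL v)) = ginf GL (wsup v).
Proof.
case: (zeros_case v) => [[k Hk]|->].
- have HM: wsup v 0 = true by apply: (le_first (wsup_ge v k)); rewrite shift_0.
  case: (supL_core Hk) => -> _.
  by rewrite {2}(eta_wcat (wsup v)) HM ginf_wcat wcat_cat.
- have Z: wsup zeros = zeros := lsup_const false.
  by rewrite ginf_GL_zeros Z ginf_GL_zeros {2}(eta_wcat zeros).
Qed.

Lemma sup0_L v : wsup0 (ginf GL v) = wsup (ginf GL v).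
Proof.
case: (zeros_case v) => [[k Hk]|->].
- by case: (supL_core Hk) => -> ->.
- have Z: wsup zeros = zeros := lsup_const false.
  rewrite ginf_GL_zeros Z; apply: lsup_eq; apply: lub_of_approx.
  + by move=> t [k [_ ->]]; apply: le_refl.
  + by move=> n; exists zeros; split => //; exists 0.
Qed.

Lemma sup_R v : wsup v = wsup0 v ->
  wsup (ginf GR v) = wcat [:: true] (ginf GR (wsup v)) /\
  wsup0 (ginf GR v) = wcat [:: true] (ginf GR (wsup v)).
Proof.
move=> H.
have Hb: forall k, lex_le (wcat [:: true] (ginf GR (shift k v))) (wcat [:: true] (ginf GR (wsup0 v))).
  by move=> k; apply: le_wcat; apply: ginf_le; rewrite -H; apply: wsup_ge.
have Ha: approx (after false v) (wsup0 v).
  by apply: lsup_approx; case: (wsup0_nonempty H) => k Hk; exists (shift k.+1 v); exists k.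
rewrite H; split.
- apply: (@lub_map _ _ (fun s => wcat [:: true] (ginf GR s)) (wsup0 v) Ha).
  + by move=> s [k [Hk ->]]; have := @suffix_pos GR v k 1; rewrite Hk => /(_ isT).
  + exact: cont_cg.
  + move=> t /suffix_form [k' [j [Hj ->]]]; case E: (v k') Hj; case: j => [|[|j]] //= _.
    all: try first [exact: Hb | by apply: lt_le; apply: lt_first].
- apply: (@lub_map _ _ (fun s => wcat [:: true] (ginf GR s)) (wsup0 v) Ha).
  + by move=> s [k [Hk ->]]; have := @after_pos GR v k 0 false; rewrite Hk => /(_ isT erefl).
  + exact: cont_cg.
  + move=> t /after_form [k' [j [Hj [Hn ->]]]]; case E: (v k') Hj Hn; case: j => [|[|j]] //= _ _.
    all: try exact: Hb.
Qed.

Lemma SM_aux y m : lex_le y m ->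
  lex_le (wcat [:: true; false] (ginf GM y)) (wcat [:: true] (ginf GM m)).
Proof.
move=> H; rewrite -[[:: true; false]]/([:: true] ++ [:: false]) -wcat_cat.
by apply: le_wcat; apply: lt_le; apply: IM_aux.
Qed.

Lemma sup_M v : wsup v = wsup0 v ->
  wsup (ginf GM v) = wcat [:: true] (ginf GM (wsup v)) /\
  wsup0 (ginf GM v) = wcat [:: true] (ginf GM (wsup v)).
Proof.
move=> H.
have Hs: forall k, lex_le (shift k v) (wsup0 v) by move=> k; rewrite -H; apply: wsup_ge.
have Hb: forall k, lex_le (wcat [:: true] (ginf GM (shift k v))) (wcat [:: true] (ginf GM (wsup0 v))).
  by move=> k; apply: le_wcat; apply: ginf_le.
have Ha: approx (after false v) (wsup0 v).
  by apply: lsup_approx; case: (wsup0_nonempty H) => k Hk; exists (shift k.+1 v); exists k.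
rewrite H; split.
- apply: (@lub_map _ _ (fun s => wcat [:: true] (ginf GM s)) (wsup0 v) Ha).
  + by move=> s [k [Hk ->]]; have := @suffix_pos GM v k 1; rewrite Hk => /(_ isT).
  + exact: cont_cg.
  + move=> t /suffix_form [k' [j [Hj ->]]]; case E: (v k') Hj; case: j => [|[|j]] //= _.
    all: try first [exact: Hb | exact: SM_aux | by apply: lt_le; apply: lt_first].
- apply: (@lub_map _ _ (fun s => wcat [:: true] (ginf GM s)) (wsup0 v) Ha).
  + by move=> s [k [Hk ->]]; have := @after_pos GM v k 0 false; rewrite Hk => /(_ isT erefl).
  + exact: cont_cg.
  + move=> t /after_form [k' [j [Hj [Hn ->]]]]; case E: (v k') Hj Hn; case: j => [|[|j]] //= _ _.
    all: try exact: Hb.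
    rewrite wcat0 ginf_shift_cons; case E2: (v k'.+1) => /=.
      exact: SM_aux.
    by apply: lt_le; apply: lt_first.
Qed.
Lemma inf1_pres g v : winf v = winf1 v -> winf1 (ginf g v) = winf (ginf g v).
Proof. by case: g => H; [apply: inf1_L|apply: inf1_M|apply: inf1_R]. Qed.

Lemma sup0_pres g v : wsup v = wsup0 v -> wsup (ginf g v) = wsup0 (ginf g v).
Proof.
case: g => H; first by rewrite sup0_L.
- by case: (sup_M H) => -> ->.
- by case: (sup_R H) => -> ->.
Qed.

Lemma sup0_pres_s s v : wsup v = wsup0 v -> wsup (sinf s v) = wsup0 (sinf s v).
Proof. by elim: s => //= g s IH H; apply: sup0_pres; apply: IH. Qed.

Lemma gfin_cat g a b : gfin g (a ++ b) = gfin g a ++ gfin g b.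
Proof. by rewrite /gfin map_cat flatten_cat. Qed.

Lemma stepA g : exists q wX, gimg g true = q ++ true :: wX /\
  forall v, winf v = winf1 v -> winf (ginf g v) = wcat wX (ginf g (winf v)).
Proof.
case: g.
- by exists [:: false], [::]; split => // v _; rewrite wcat0 inf_L.
- by exists [::], [:: false]; split => // v H; rewrite inf_M.
- by exists [::], [::]; split => // v _; rewrite wcat0 inf_R.
Qed.

Lemma partA s : exists w, (exists p, sfin s [:: true] = p ++ true :: w) /\
  forall u, winf u = winf1 u ->
    winf1 (sinf s u) = winf (sinf s u) /\ winf (sinf s u) = wcat w (sinf s (winf u)).
Proof.
elim: s => [|g s [w [[p Hp] IH]]].
  exists [::]; split; first by exists [::].
  by move=> u H; split => //=; rewrite wcat0.
case: (stepA g) => q [wX [Hq HX]]; exists (wX ++ gfin g w); split.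
  exists (gfin g p ++ q); rewrite /= Hp gfin_cat gfin_cons Hq.
  by rewrite -!catA.
move=> u H; have [H1 H2] := IH u H; rewrite /=; split.
  by apply: inf1_pres; rewrite H1.
by rewrite HX ?H1 // H2 ginf_wcat wcat_cat.
Qed.

Lemma stepB g w2 : exists p0 w3, gfin g (false :: true :: w2) = p0 ++ false :: true :: w3 /\
  forall v Z, wsup v = wsup0 v -> wsup v = wcat (true :: w2) Z ->
    wsup (ginf g v) = wcat (true :: w3) (ginf g Z).
Proof.
case: g.
- exists [:: false], (gfin GL w2); split => // v Z H E.
  apply: (@wcat_inj [:: false]); rewrite sup_L E ginf_wcat wcat_cat.
  by rewrite gfin_cons.
- exists [::], (true :: false :: gfin GM w2); split => // v Z H E.
  by case: (sup_M H) => -> _; rewrite E ginf_wcat wcat_cat.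
- exists [::], (true :: gfin GR w2); split => // v Z H E.
  by case: (sup_R H) => -> _; rewrite E ginf_wcat wcat_cat.
Qed.

Lemma partB t X : X = GM \/ X = GR ->
  exists p w2, sfin (rcons t X) [:: false] = p ++ false :: true :: w2 /\
  forall u, wsup u = wsup0 u -> wsup (sinf (rcons t X) u) = wcat (true :: w2) (sinf (rcons t X) (wsup u)).
Proof.
move=> HX; elim: t => [|g t [p [w2 [Hp IH]]]].
  exists [::], [::]; split; first by case: HX => ->.
  move=> u H /=; case: HX => ->.
    by case: (sup_M H) => -> _.
  by case: (sup_R H) => -> _.
case: (stepB g w2) => p0 [w3 [Hp0 HB]]; exists (gfin g p ++ p0), w3; split.
  by rewrite rcons_cons /= Hp gfin_cat Hp0 catA.
move=> u H; rewrite rcons_cons /=; apply: HB; last exact: IH.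
exact: sup0_pres_s.
Qed.

Lemma prefix_wcat w x : prefix_of_inf w x -> x = wcat w (shift (size w) x).
Proof.
move=> H; apply: functional_extensionality => i; rewrite /wcat /shift.
by case: ltnP => Hi; [rewrite H|rewrite subnKC].
Qed.
Lemma prefix_of_wcat w y z : prefix_of_inf y z -> prefix_of_inf (w ++ y) (wcat w z).
Proof.
move=> H i; rewrite size_cat nth_cat /wcat => Hi; case: ltnP => // Hw.
by apply: H; rewrite -ltn_subLR in Hi.
Qed.
Lemma prefix_catl a b x : prefix_of_inf (a ++ b) x -> prefix_of_inf a x.
Proof.
move=> H i Hi; rewrite -H; first by rewrite nth_cat Hi.
by rewrite size_cat ltn_addr.
Qed.
Lemma prefix_ginf g w x : prefix_of_inf w x -> prefix_of_inf (gfin g w) (ginf g x).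
Proof.
move=> H; rewrite (prefix_wcat H) ginf_wcat -{1}(cats0 (gfin g w)).
by apply: prefix_of_wcat => i.
Qed.

Lemma stepC g w0 : exists w1,
  (forall x, prefix_of_inf (rcons w0 false) x -> prefix_of_inf (rcons w1 false) (ginf g x)) /\
  forall v, wsup v = wsup0 v ->
    ginf g (wcat (rcons w0 false) (wsup v)) = wcat (rcons w1 false) (wsup (ginf g v)).
Proof.
case: g.
- exists (gfin GL (rcons w0 false)); split.
    move=> x Hx; rewrite (prefix_wcat Hx) ginf_wcat -cats1.
    by apply: prefix_of_wcat => -[|i] //= _; rewrite ginfL_0.
  by move=> v _; rewrite ginf_wcat -sup_L wcat_cat cats1.
- exists (gfin GM w0); split.
    move=> x /(@prefix_ginf GM _ _); rewrite -cats1 gfin_cat -cats1.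
    by change (gfin GM [:: false]) with ([:: false] ++ [:: true]); rewrite catA => /prefix_catl.
  move=> v H; case: (sup_M H) => -> _.
  rewrite ginf_wcat wcat_cat -cats1 gfin_cat -cats1 -catA.
  by change (gfin GM [:: false]) with ([:: false] ++ [:: true]).
- exists (gfin GR w0); split.
    move=> x /(@prefix_ginf GR _ _); rewrite -cats1 gfin_cat -cats1.
    by change (gfin GR [:: false]) with ([:: false] ++ [:: true]); rewrite catA => /prefix_catl.
  move=> v H; case: (sup_R H) => -> _.
  rewrite ginf_wcat wcat_cat -cats1 gfin_cat -cats1 -catA.
  by change (gfin GR [:: false]) with ([:: false] ++ [:: true]).
Qed.

Lemma partC t : exists w0, prefix_of_inf (rcons w0 false) (sinf (rcons t GL) zeros) /\
  forall u, wsup u = wsup0 u ->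
    wcat (rcons w0 false) (wsup (sinf (rcons t GL) u)) = sinf (rcons t GL) (wsup u).
Proof.
elim: t => [|g t [w0 [Hp IH]]].
  exists [::]; split; first by move=> [|i] //= _; rewrite ginf_GL_zeros.
  by move=> u _ /=; rewrite sup_L.
case: (stepC g w0) => w1 [HP HS]; exists w1; split.
  by rewrite rcons_cons /=; apply: HP.
move=> u H; rewrite rcons_cons /= -IH // HS //.
exact: sup0_pres_s.
Qed.

Theorem lemma2p3 :
  (forall u : word, winf (ginf GL u) = ginf GL (winf u)) /\
  (forall u : word, winf (ginf GR u) = ginf GR (winf u)) /\
  (forall u : word, wcat [:: false] (wsup (ginf GL u)) = ginf GL (wsup u)) /\
  (forall u : word, winf u = winf1 u ->
     winf (ginf GM u) = wcat [:: false] (ginf GM (winf u))) /\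
  (forall u : word, wsup u = wsup0 u ->
     wsup (ginf GR u) = wcat [:: true] (ginf GR (wsup u)) /\
     wsup (ginf GM u) = wcat [:: true] (ginf GM (wsup u))) /\
  (* (a) *)
  (forall s : seq gen, exists w : seq bool,
     suffix w (sfin s [:: true]) /\
     forall u : word, winf u = winf1 u ->
       winf1 (sinf s u) = winf (sinf s u) /\
       winf (sinf s u) = wcat w (sinf s (winf u))) /\
  (* (b) : sigma in {L,M,R}^* M  or  {L,M,R}^* R *)
  (forall (t : seq gen) (X : gen), (X = GM \/ X = GR) ->
     exists w : seq bool,
     suffix w (sfin (rcons t X) [:: false]) /\
     forall u : word, wsup u = wsup0 u ->
       wsup0 (sinf (rcons t X) u) = wsup (sinf (rcons t X) u) /\
       wsup (sinf (rcons t X) u) = wcat w (sinf (rcons t X) (wsup u))) /\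
  (* (c) : sigma in {L,M,R}^* L *)
  (forall t : seq gen,
     exists w : seq bool,
     prefix_of_inf w (sinf (rcons t GL) zeros) /\
     forall u : word, wsup u = wsup0 u ->
       wcat w (wsup0 (sinf (rcons t GL) u)) = wcat w (wsup (sinf (rcons t GL) u)) /\
       wcat w (wsup (sinf (rcons t GL) u)) = sinf (rcons t GL) (wsup u)).
Proof.
split; first exact: inf_L.
split; first exact: inf_R.
split; first exact: sup_L.
split; first exact: inf_M.
split.
  by move=> u H; split; [case: (sup_R H)|case: (sup_M H)].
split.
  move=> s; case: (partA s) => w [[p Hp] H]; exists w; split => //.
  by apply/suffixP; exists (rcons p true); rewrite Hp cat_rcons.
split.
  move=> t X HX; case: (partB t HX) => p [w2 [Hp H]]; exists (true :: w2); split.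
    by apply/suffixP; exists (rcons p false); rewrite Hp cat_rcons.
  by move=> u Hu; split; [rewrite (sup0_pres_s _ Hu)|apply: H].
move=> t; case: (partC t) => w0 [Hp H]; exists (rcons w0 false); split => //.
by move=> u Hu; split; [rewrite (sup0_pres_s _ Hu)|apply: H].
Qed.
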